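(* Let $B$ be a path-connected space, $b_0\in B$, and let $\{p_s\colon E_s\to B\}_{s\in S}$ be a family of disk-hedgehog coverings with each $E_s$ a Peano space, together with points $e_s\in E_s$ with $p_s(e_s)=b_0$. Then the Peano fibered product $(p,e)$ of $\{(p_s,e_s)\}_{s\in S}$ is a disk-hedgehog covering which is the supremum of $\{(p_s,e_s)\}_{s\in S}$: $(p,e)\ge(p_s,e_s)$ for all $s\in S$, and $(q,e')\ge(p,e)$ for every pointed disk-hedgehog covering $(q,e')$ with Peano total space satisfying $(q,e')\ge(p_s,e_s)$ for all $s$.
   Context: All maps are continuous; a Peano space is a connected, locally path-connected space. The Peanification of a space $Y$ is the set $Y$ with the topology whose basis consists of path components of open subsets of $Y$. For a class $\mathcal{P}$ of spaces, $p\colon E\to B$ is a $\mathcal{P}$-covering if for every $e_0\in E$, $X\in\mathcal{P}$, $x_0\in X$ and map $f\colon X\to B$ with $f(x_0)=p(e_0)$ there is a unique map $g\colon X\to E$ with $p\circ g=f$, $g(x_0)=e_0$. A directed wedge is $(Z,z_0)=\bigvee_{s\in S}(Z_s,z_s)$, a wedge of pointed Peano spaces indexed by a directed set $S$, topologized so that $U\subset Z\setminus\{z_0\}$ is open iff each $U\cap Z_s$ is open, and $U\ni z_0$ is an open neighborhood of $z_0$ iff each $U\cap Z_s$ is open and there is $t\in S$ with $Z_s\subset U$ for all $s>t$. A disk-hedgehog is a directed wedge with each $Z_s$ homeomorphic to the 2-disk $D^2$; a disk-hedgehog covering is a $\mathcal{P}$-covering for $\mathcal{P}$ the class of all disk-hedgehogs.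 For disk-hedgehog coverings $p_i\colon E_i\to B$ ($E_i$ Peano) and $e_i\in E_i$, $(p_1,e_1)\ge(p_2,e_2)$ means $p_1(e_1)=p_2(e_2)$ and there is a map $f\colon E_1\to E_2$ with $p_2\circ f=p_1$ and $f(e_1)=e_2$. The Peano fibered product of $\{(p_s,e_s)\}$ is $(p,e)$, where $e=\{e_s\}_{s\in S}$, $E$ is the Peanification of the path component of $e$ in $\{\{x_s\}\in\prod_{s}E_s : p_s(x_s)=p_t(x_t)\ \forall s,t\}$, and $p(\{x_s\})=p_t(x_t)$ for any $t$. *)

(* Defs.v *)
From HB Require Import structures.
From mathcomp Require Import all_boot all_order all_algebra.
From mathcomp Require Import all_classical all_reals all_analysis.
From mathcomp Require Import wedge_sigT.
From mathcomp Require Import Rstruct Rstruct_topology.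
From Stdlib Require Import Rdefinitions.

Set Implicit Arguments.
Unset Strict Implicit.
Unset Printing Implicit Defensive.

Import Order.TTheory GRing.Theory Num.Theory.
Local Open Scope classical_set_scope.
Local Open Scope ring_scope.

Definition is_path {Y : topologicalType} (g : R -> Y) :=
  {within `[0%R, 1%R], continuous g}.

Definition path_comp {Y : topologicalType} (A : set Y) (x : Y) : set Y :=
  [set y | exists g : R -> Y, [/\ is_path g, g 0%R = x, g 1%R = y &
                                 g @` `[0%R, 1%R] `<=` A]].

Definition path_connected {Y : topologicalType} (A : set Y) :=
  forall x y, A x -> A y -> path_comp A x y.

Definition locally_path_connected (Y : topologicalType) :=
  forall (x : Y) (U : set Y), nbhs x U ->
    exists V : set Y, [/\ open V, V x, V `<=` U & path_connected V].

Definition Peano (Y : topologicalType) :=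
  connected [set: Y] /\ locally_path_connected Y.

Definition peanify (Y : Type) : Type := Y.

Section Peanification.
Context {Y : topologicalType}.

Definition peano_basis : set (set Y) :=
  [set P | exists (U : set Y) (x : Y), [/\ open U, U x & P = path_comp U x]].

HB.instance Definition _ := Choice.on (peanify Y).
HB.instance Definition _ := isSubBaseTopological.Build (peanify Y)
  (peano_basis : set (set (peanify Y))) id.

End Peanification.

Definition disk_set : set (R * R)%type :=
  [set z | (z.1 ^+ 2 + z.2 ^+ 2 <= 1)%R].
Definition Disk : topologicalType := set_type disk_set.

Definition directed {d : Order.disp_t} (S : porderType d) :=
  forall a b : S, exists c : S, (a <= c)%O /\ (b <= c)%O.

Section DiskWedge.
Context {d : Order.disp_t} {S : porderType d} (z : S -> Disk).

Definition dwedge : Type := @wedge _ (fun _ : S => Disk) z.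
Definition dlift (s : S) : Disk -> dwedge := @wedge_lift _ (fun _ : S => Disk) z s.
Arguments dlift : clear implicits.

Definition dwedge_open : set (set dwedge) :=
  [set U | (forall s, open (dlift s @^-1` U)) /\
           (forall s0, U (dlift s0 (z s0)) ->
              exists t : S, forall s : S, (t < s)%O -> range (dlift s) `<=` U)].

HB.instance Definition _ := Choice.on dwedge.
HB.instance Definition _ := isSubBaseTopological.Build dwedge
  dwedge_open id.

End DiskWedge.
Arguments dlift {d S} z s _.

Section Coverings.
Context {B : topologicalType}.

Definition unique_lifting (X : topologicalType) {E : topologicalType}
    (p : E -> B) :=
  forall (e0 : E) (x0 : X) (f : X -> B), continuous f -> f x0 = p e0 ->
    exists! g : X -> E, [/\ continuous g, p \o g = f & g x0 = e0].

Definition dh_covering {E : topologicalType} (p : E -> B) :=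
  continuous p /\
  forall (d : Order.disp_t) (S : porderType d) (z : S -> Disk),
    directed S -> unique_lifting (dwedge z) p.

Definition dh_ge {E1 E2 : topologicalType} (p1 : E1 -> B) (e1 : E1)
    (p2 : E2 -> B) (e2 : E2) :=
  [/\ Peano E1, Peano E2, dh_covering p1, dh_covering p2 &
      p1 e1 = p2 e2 /\
      exists f : E1 -> E2, [/\ continuous f, p2 \o f = p1 & f e1 = e2]].

End Coverings.

Section FiberedProduct.
Context {B : topologicalType} {S : Type} {E : S -> topologicalType}
  (p : forall s, E s -> B) (e : forall s, E s).

Definition fib_set : set (prod_topology E) :=
  [set x | forall s t, p (x s) = p (x t)].

Definition fib_comp : set (prod_topology E) := path_comp fib_set e.

Definition fib_space : topologicalType := peanify (set_type fib_comp).

Definition fib_map (t : S) : fib_space -> B :=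
  fun x => p (projT1 (x : set_type fib_comp) t).

Lemma fib_pt_proof (b0 : B) (he : forall s, p (e s) = b0) : e \in fib_comp.
Proof.
apply/mem_set; exists (cst e); split => //.
- by apply: continuous_subspaceT => x; exact: cst_continuous.
- by move=> _ [r _ <-] s t; rewrite /= !he.
Qed.

Definition fib_pt (b0 : B) (he : forall s, p (e s) = b0) : fib_space :=
  exist _ e (fib_pt_proof he).

End FiberedProduct.
Arguments fib_map {B S E} p e t _.
Arguments fib_pt {B S E} p e {b0} he.

(* Main.v *)
Require Import Defs.
From HB Require Import structures.
From mathcomp Require Import all_boot all_order all_algebra.
From mathcomp Require Import all_classical all_reals all_analysis.
From mathcomp Require Import wedge_sigT Rstruct Rstruct_topology.
From Stdlib Require Import Rdefinitions.
Set Implicit Arguments.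
Unset Strict Implicit.
Unset Printing Implicit Defensive.
Import Order.TTheory GRing.Theory Num.Theory.
Local Open Scope classical_set_scope.
Section subbase.
Context {T : topologicalType} {I : choiceType} (D : set I) (b : I -> set T)
  (Hop : forall A, open A <->
     exists2 F, F `<=` finI_from D b & \bigcup_(i in F) i = A).

Lemma sb_in i : D i -> open (b i).
Proof.
move=> Di; apply/Hop; exists [set b i]; first by move=> _ ->; exact: finI_from1.
by rewrite bigcup_set1.
Qed.

Lemma sb_nbhs_filter (x : T) (F : set_system T) : Filter F ->
  (forall i, D i -> b i x -> F (b i)) -> forall U, nbhs x U -> F U.
Proof.
move=> FF HD U; rewrite nbhsE => -[B [oB Bx] BU].
apply: (filterS BU); move/Hop: oB => [G GF GB].
move: Bx; rewrite -GB => -[C /[dup] CG /GF [D' D'D CE] Cx].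
apply: (@filterS _ _ _ C).
  by move=> y Cy; exists C.
rewrite -CE; apply: filter_bigI => i iD; apply: HD; first by apply/set_mem; apply: D'D.
by move: Cx; rewrite -CE; apply.
Qed.

Lemma sb_cont {X : topologicalType} (f : X -> T) :
  (forall i, D i -> open (f @^-1` b i)) -> continuous f.
Proof.
move=> Hf x; apply: sb_nbhs_filter => i Di Ax.
by apply: open_nbhs_nbhs; split => //; exact: Hf.
Qed.

End subbase.

Section peano_sb.
Context {Y : topologicalType}.

Lemma peano_Hop (A : set (peanify Y)) : open A <->
  exists2 F, F `<=` finI_from (@peano_basis Y) id & \bigcup_(i in F) i = A.
Proof.
rewrite /open /= /Builders_14.open_from /=; split => -[F ? ?]; by exists F.
Qed.

Lemma peano_in (P : set (peanify Y)) : @peano_basis Y P -> open P.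
Proof. exact: (sb_in peano_Hop). Qed.
End peano_sb.
Lemma within_comp {T U V : topologicalType} (A : set T) (B : set U)
  (h : T -> U) (g : U -> V) :
  {within A, continuous h} -> (forall x, A x -> B (h x)) ->
  {within B, continuous g} -> {within A, continuous (g \o h)}.
Proof.
move=> /subspace_continuousP ch hAB /subspace_continuousP cg.
apply/subspace_continuousP => x Ax W /= /(cg _ (hAB _ Ax)).
move=> /(ch _ Ax); rewrite !nbhs_simpl /= /within.
move=> /= H; apply: (filterS _ H) => y Hy Ay; exact: (Hy Ay (hAB _ Ay)).
Qed.
From mathcomp Require Import lra ring.
Notation i01 := (`[0%R, 1%R] : set R).
Section paths.
Local Open Scope ring_scope.

Lemma aff_cont (a b : R) : continuous (fun t : R => t * a + b).
Proof. move=> t.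
have := @cvgD R R^o R (nbhs t) _ (fun t : R => t * a) (fun=> b) (t * a) b.
apply. exact: mulrr_continuous. exact: cvg_cst. Qed.

Lemma itv01P (t : R) : i01 t <-> 0 <= t <= 1.
Proof. by rewrite /= in_itv /= ?R0E ?R1E. Qed.

Lemma path_aff {Y : topologicalType} (g : R -> Y) (a b : R) (A : set R) :
  is_path g -> (forall t, A t -> i01 (t * a + b)) ->
  {within A, continuous (g \o (fun t => t * a + b))}.
Proof.
move=> pg H; apply: (within_comp _ H) => //.
exact/continuous_subspaceT/aff_cont.
Qed.

Context {Y : topologicalType}.
Implicit Types (A B : set Y) (x y w : Y).

Lemma path_comp_refl A x : A x -> path_comp A x x.
Proof.
move=> Ax; exists (cst x); split => //; last by move=> _ [r _ <-].
by apply: continuous_subspaceT; exact: cst_continuous.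
Qed.

Lemma path_comp_l A x y : path_comp A x y -> A x.
Proof.
move=> [g [_ <- _ gA]]; apply: gA; exists 0 => //; apply/itv01P; lra.
Qed.

Lemma path_comp_r A x y : path_comp A x y -> A y.
Proof.
move=> [g [_ _ <- gA]]; apply: gA; exists 1 => //; apply/itv01P; lra.
Qed.

Lemma path_compS A B x y : A `<=` B -> path_comp A x y -> path_comp B x y.
Proof. by move=> AB [g [? ? ? gA]]; exists g; split => // u /gA /AB. Qed.

Lemma path_comp_sym A x y : path_comp A x y -> path_comp A y x.
Proof.
move=> [g [pg g0 g1 gA]]; exists (g \o (fun t => t * (-1) + 1)); split.
- apply: path_aff => // t /itv01P Ht; apply/itv01P; lra.
- by rewrite /= mul0r add0r.
- by rewrite /= mul1r addNr.
- move=> _ [t /itv01P Ht <-]; apply: gA; exists (t * (-1) + 1) => //.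
  apply/itv01P; lra.
Qed.

Lemma path_comp_trans A x y w :
  path_comp A x y -> path_comp A y w -> path_comp A x w.
Proof.
move=> [g1 [pg1 g10 g11 g1A]] [g2 [pg2 g20 g21 g2A]].
have I01 : i01 = (`[0%R, 2^-1] : set R) `|` `[2^-1, 1%R].
  apply/seteqP; split => t /=; rewrite !in_itv /= ?R0E ?R1E.
    by move=> /andP[? ?]; have [?|?] := lerP t (2^-1); [left|right]; rewrite ?andbT //;
      apply/andP; split => //; lra.
  by case=> /andP[? ?]; apply/andP; split; lra.
pose h t := if t <= 2^-1 then g1 (t * 2 + 0) else g2 (t * 2 + (-1)).
exists h; split.
- rewrite /is_path I01; apply: withinU_continuous; try exact: interval_closed.
  + apply: (@subspace_eq_continuous _ _ _ (g1 \o (fun t => t * 2 + 0))).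
      move=> t /set_mem; rewrite /= in_itv /= ?R0E ?R1E => /andP[H1 H2].
      by rewrite /from_subspace /h /= H2.
    apply: path_aff => // t; rewrite /= !in_itv /= ?R0E ?R1E => /andP[? ?].
    apply/andP; split; lra.
  + apply: (@subspace_eq_continuous _ _ _ (g2 \o (fun t => t * 2 + (-1)))).
      move=> t /set_mem; rewrite /= in_itv /= ?R0E ?R1E => /andP[H1 H2].
      rewrite /from_subspace /h /=; case: (lerP t (2^-1)) => // Ht; have -> : t = 2^-1 by lra.
      have -> : 2^-1 * 2 + (-1) = 0 :> R by lra.
      have -> : 2^-1 * 2 + 0 = 1 :> R by lra.
      by rewrite g11 g20.
    apply: path_aff => // t; rewrite /= !in_itv /= ?R0E ?R1E => /andP[? ?].
    apply/andP; split; lra.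
- have H0 : (0:R) <= 2^-1 by rewrite invr_ge0. rewrite /h R0E H0.
  by rewrite mul0r add0r.
- have H0 : forall t : R, t = 1 -> t <= 2^-1 = false by move=> t ->; apply/negbTE; rewrite -ltNge; lra.
  rewrite /h R1E (H0 1 erefl).
  by rewrite mul1r; have -> : 2 + (-1) = 1 :> R by lra.
- move=> _ [t /itv01P Ht <-]; rewrite /h; case: (lerP t (2^-1)) => Ht2.
    by apply: g1A; exists (t * 2 + 0) => //; apply/itv01P; lra.
  by apply: g2A; exists (t * 2 + (-1)) => //; apply/itv01P; lra.
Qed.

Lemma path_comp_map {Z : topologicalType} (f : Y -> Z) A (B : set Z) x y :
  continuous f -> (forall u, A u -> B (f u)) ->
  path_comp A x y -> path_comp B (f x) (f y).
Proof.
move=> cf fAB [g [pg g0 g1 gA]]; exists (f \o g); split.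
- apply: (within_comp pg (B := setT)) => //.
  exact: continuous_subspaceT.
- by rewrite /= g0.
- by rewrite /= g1.
- by move=> _ [t Ht <-]; apply: fAB; apply: gA; exists t.
Qed.

Lemma path_pts (g : R -> Y) A (t u : R) : is_path g ->
  g @` i01 `<=` A -> i01 t -> i01 u ->
  path_comp A (g t) (g u).
Proof.
move=> pg gA /itv01P Ht /itv01P Hu.
have H r : i01 r -> i01 (r * (u - t) + t).
  by move=> /itv01P /andP[? ?]; apply/itv01P; case/andP: Ht; case/andP: Hu;
    move=> *; apply/andP; split; nra.
exists (g \o (fun r => r * (u - t) + t)); split.
- exact: path_aff.
- by rewrite /= mul0r add0r.
- by rewrite /= mul1r subrK.
- by move=> _ [r Hr <-]; apply: gA; exists (r * (u - t) + t) => //; exact: H.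
Qed.

End paths.
Section peano.
Local Open Scope ring_scope.
Context {Y : topologicalType}.
Definition to_peano (y : Y) : peanify Y := y.

Lemma path_seg (g : R -> Y) (A : set Y) (t u : R) : is_path g ->
  i01 t -> i01 u -> (forall r, i01 r -> A (g (r * (u - t) + t))) ->
  path_comp A (g t) (g u).
Proof.
move=> pg /itv01P Ht /itv01P Hu gA.
have H r : i01 r -> i01 (r * (u - t) + t).
  by move=> /itv01P /andP[? ?]; apply/itv01P; case/andP: Ht; case/andP: Hu;
    move=> *; apply/andP; split; nra.
exists (g \o (fun r => r * (u - t) + t)); split.
- exact: path_aff.
- by rewrite /= mul0r add0r.
- by rewrite /= mul1r subrK.
- by move=> _ [r Hr <-]; exact: gA.
Qed.

Lemma peano_id_cont : continuous (fun x : peanify Y => (x : Y)).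
Proof.
apply/continuousP => U oU.
have -> : (fun x : peanify Y => (x : Y)) @^-1` U =
    \bigcup_(x in U) (path_comp U x : set (peanify Y)).
  apply/seteqP; split => x /=.
    by move=> Ux; exists x => //; exact: path_comp_refl.
  by move=> [y Uy /path_comp_r].
apply: bigcup_open => x Ux; apply: peano_in; by exists U, x.
Qed.

Lemma lpc_to_peano {X : topologicalType} (f : X -> Y) :
  locally_path_connected X -> continuous f ->
  continuous (to_peano \o f).
Proof.
move=> lX cf; apply: (sb_cont (@peano_Hop Y) (f := to_peano \o f)) => _ [U [y [oU Uy ->]]].
rewrite openE => x /= Px.
have fxU : U (f x) := path_comp_r Px.
have : nbhs x (f @^-1` U).
  by apply: cf; apply: open_nbhs_nbhs; split.
move=> /lX [V [oV Vx VU pV]].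
apply: (@filterS _ _ _ V); last exact: open_nbhs_nbhs.
move=> x' Vx'; apply: (path_comp_trans Px).
have := path_comp_map cf VU (pV _ _ Vx Vx').
by apply: path_compS.
Qed.

Lemma path_to_peano (g : R -> Y) : is_path g -> @is_path (peanify Y) g.
Proof.
move=> pg; have pg' := pg.
move/subspace_continuousP : pg' => cg.
apply/subspace_continuousP => t Ht.
move=> W; apply: (@sb_nbhs_filter _ _ _ _ (@peano_Hop Y) (g t) (g @ within i01 (nbhs t))) => // _ [U [y [oU Uy ->]]] Pgt.
have gtU : U (g t) := path_comp_r Pgt.
have := cg t Ht U; rewrite nbhs_simpl /=.
move=> /(_ (open_nbhs_nbhs (conj oU gtU))) /nbhs_ballP [e e0 He].
apply/nbhs_ballP; exists e => // s /= ets Hs.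
apply: (path_comp_trans Pgt); apply: path_seg => // r Hr.
have Hv : i01 (r * (s - t) + t).
  move: Hr Ht Hs => /itv01P/andP[? ?] /itv01P/andP[? ?] /itv01P/andP[? ?].
  by apply/itv01P; apply/andP; split; nra.
apply: (He _ _ Hv) => /=.
move: ets; rewrite /ball /= !ltr_distlC => /andP[? ?].
move: Hr => /itv01P/andP[? ?].
apply/andP; split; nra.
Qed.

End peano.
Lemma itv0 : i01 0%R.
Proof. by apply/itv01P; rewrite lexx ler01. Qed.
Lemma itv1 : i01 1%R.
Proof. by apply/itv01P; rewrite lexx ler01. Qed.

Section peano2.
Context {Y : topologicalType}.

Lemma lpc_peano : locally_path_connected (peanify Y).
Proof.
move=> x U nU.
have [V [oV Vx VU]] : exists V : set Y,
    [/\ open V, V x & (path_comp V x : set (peanify Y)) `<=` U].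
  pose F := [set W : set (peanify Y) | exists V : set Y,
    [/\ open V, V x & (path_comp V x : set (peanify Y)) `<=` W]].
  have FF : Filter F.
    constructor.
    - by exists setT; split => //; exact: openT.
    - move=> P Q [V1 [oV1 V1x H1]] [V2 [oV2 V2x H2]].
      exists (V1 `&` V2); split; [exact: openI | by split |].
      move=> y Hy; split; [apply: H1|apply: H2]; apply: path_compS Hy;
        by move=> ? [].
    - by move=> P Q PQ [V [? ? H]]; exists V; split => // y /H /PQ.
  have := @sb_nbhs_filter _ _ _ _ (@peano_Hop Y) x F FF.
  apply => //.
  move=> _ [W [y [oW Wy ->]]] Pyx; exists W; split => //.
    exact: path_comp_r Pyx.
  by move=> z Hz; exact: path_comp_trans Pyx Hz.
exists (path_comp V x : set (peanify Y)); split => //.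
- by apply: peano_in; exists V, x; split.
- exact: path_comp_refl.
- move=> a b Ha Hb.
  have [g [pg g0 g1 gV]] : path_comp V a b :=
    path_comp_trans (path_comp_sym Ha) Hb.
  exists g; split => //; first exact: path_to_peano.
  move=> _ [r Hr <-]; apply: (path_comp_trans Ha); rewrite -g0.
  exact: (path_pts pg gV itv0 Hr).
Qed.

End peano2.

Lemma pc_connected (X : topologicalType) (x0 : X) :
  (forall x, path_comp setT x0 x) -> connected [set: X].
Proof.
move=> H.
have -> : [set: X] = \bigcup_(x in [set: X]) (projT1 (cid (H x)) @` i01).
  apply/seteqP; split => // x _; exists x => //.
  case: (cid (H x)) => g [pg g0 g1 _] /=; exists 1%R => //; exact: itv1.
apply: bigcup_connected.
  exists x0 => x _; case: (cid (H x)) => g [pg g0 g1 _] /=.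
  by exists 0%R => //; exact: itv0.
move=> x _; case: (cid (H x)) => g [pg _ _ _] /=.
apply: connected_continuous_connected => //; exact: segment_connected.
Qed.

Lemma peano_pc (X : topologicalType) : Peano X ->
  forall x y : X, path_comp setT x y.
Proof.
move=> [cX lX] x.
pose C := path_comp [set: X] x.
have lem (y : X) : exists V : set X, [/\ open V, V y & forall z, V z -> path_comp setT y z].
  have [V [oV Vy _ pV]] := lX y setT filterT.
  by exists V; split => // z Vz; apply: path_compS (pV _ _ Vy Vz).
have oC : open C.
  rewrite openE => y Cy; have [V [oV Vy HV]] := lem y.
  apply: (@filterS _ _ _ V); last exact: open_nbhs_nbhs.
  by move=> z Vz; exact: path_comp_trans Cy (HV _ Vz).
have cC : closed C.
  rewrite -[C]setCK closedC openE => y nCy; have [V [oV Vy HV]] := lem y.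
  apply: (@filterS _ _ _ V); last exact: open_nbhs_nbhs.
  move=> z Vz Cz; apply: nCy.
  exact: path_comp_trans Cz (path_comp_sym (HV _ Vz)).
have CT : C = setT.
  apply: cX.
  - by exists x; exact: path_comp_refl.
  - by exists C => //; rewrite setTI.
  - by exists C => //; rewrite setTI.
by move=> y; have : C y by rewrite CT.
Qed.
Section disk.
Local Open Scope ring_scope.
Notation pt := (R * R)%type.

Lemma ballRR_open (c : pt) e : open (ball c e).
Proof.
rewrite openE => p [h1 h2]; rewrite /interior /nbhs /=.
exists (ball c.1 e, ball c.2 e) => /=; last by move=> q [].
by split; apply: open_nbhs_nbhs; split => //; exact: (@ball_open R R^o).
Qed.

Lemma disk_val_cont : continuous (fun b : Disk => val b).
Proof. exact: initial_continuous. Qed.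

Lemma disk_ball_open (c : pt) e : open [set b : Disk | ball c e (val b)].
Proof.
have := (continuousP (fun b : Disk => val b)).1 disk_val_cont _ (@ballRR_open c e).
by [].
Qed.

Lemma disk_nbhs (a : Disk) (W : set Disk) : nbhs a W ->
  exists2 e, 0 < e & forall b : Disk, ball (val a) e (val b) -> W b.
Proof.
rewrite nbhsE; case=> O [oO Oa] OW.
move: oO; rewrite /open /=; case=> O' oO' O'O.
have : nbhs (val a) O' by apply: open_nbhs_nbhs; split => //; rewrite -O'O in Oa.
move=> /nbhs_ballP [e e0 He]; exists e => // b /He Hb; apply: OW.
by rewrite -O'O.
Qed.

Definition segp (p q : pt) (r : R) : pt :=
  (r * (q.1 - p.1) + p.1, r * (q.2 - p.2) + p.2).

Lemma segp_cont p q : continuous (segp p q).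
Proof.
move=> r; exact: (cvg_pair (@aff_cont (q.1 - p.1) p.1 r) (@aff_cont (q.2 - p.2) p.2 r)).
Qed.

Lemma conv_disk (a b c d r : R) : 0 <= r <= 1 -> a * a + b * b <= 1 ->
  c * c + d * d <= 1 ->
  (r * (c - a) + a) * (r * (c - a) + a) + (r * (d - b) + b) * (r * (d - b) + b) <= 1.
Proof.
move=> /andP[r0 r1] Hp Hq.
have h1 : 0 <= r * (1 - r) * ((c - a) * (c - a) + (d - b) * (d - b)).
  by apply: mulr_ge0; [apply: mulr_ge0; [exact: r0 | rewrite subr_ge0] | by rewrite -!expr2 addr_ge0 // sqr_ge0].
have h2 : 0 <= (1 - r) * (1 - (a * a + b * b)) by apply: mulr_ge0; rewrite subr_ge0.
have h3 : 0 <= r * (1 - (c * c + d * d)) by apply: mulr_ge0; rewrite ?subr_ge0.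
nra.
Qed.

Lemma segp_disk (p q : pt) r : disk_set p -> disk_set q -> i01 r ->
  disk_set (segp p q r).
Proof.
rewrite /disk_set /segp /= => /RleP + /RleP + /itv01P /andP[r0 r1].
rewrite ?RplusE ?R1E => Hp Hq; apply/RleP; rewrite ?RplusE ?R1E.
rewrite !expr2 in Hp Hq *.
by apply: conv_disk => //; apply/andP; split.
Qed.

Definition seg (a b : Disk) (r : R) : Disk := insubd a (segp (val a) (val b) r).

Lemma seg_val a b r : i01 r -> val (seg a b r) = segp (val a) (val b) r.
Proof.
move=> Hr; rewrite /seg insubdK //; apply/mem_set.
by apply: segp_disk => //; exact: set_valP.
Qed.

Lemma seg0 a b : seg a b 0 = a.
Proof.
apply: val_inj; rewrite seg_val; last exact: itv0.
rewrite /segp !mul0r !add0r.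
by case: (val a).
Qed.

Lemma seg1 a b : seg a b 1 = b.
Proof.
apply: val_inj; rewrite seg_val; last exact: itv1.
rewrite /segp !mul1r !subrK.
by case: (val b).
Qed.

Lemma within_disk (g : R -> Disk) (A : set R) :
  {within A, continuous (fun r => val (g r))} -> {within A, continuous g}.
Proof.
move=> H.
exact: (@continuous_comp_initial Disk (subspace A) _ val (g : subspace A -> Disk) H).
Qed.

Lemma seg_path a b : is_path (seg a b).
Proof.
apply: within_disk.
apply: (@subspace_eq_continuous _ _ _ (segp (val a) (val b))).
  by move=> r /set_mem Hr; rewrite /from_subspace /= seg_val.
exact/continuous_subspaceT/segp_cont.
Qed.

Lemma conv_lt (x y m r : R) : m < x -> m < y -> 0 <= r <= 1 -> m < r * (y - x) + x.
Proof.
move=> hx hy /andP[r0 r1].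
have [->|r1'] := eqVneq r 1; first by rewrite mul1r subrK.
have h1 : 0 < (1 - r) * (x - m) by apply: mulr_gt0; [rewrite subr_gt0 lt_neqAle r1'| rewrite subr_gt0].
have h2 : 0 <= r * (y - m) by apply: mulr_ge0 => //; rewrite subr_ge0 ltW.
nra.
Qed.
Lemma conv_gt (x y m r : R) : x < m -> y < m -> 0 <= r <= 1 -> r * (y - x) + x < m.
Proof.
move=> hx hy hr; have := @conv_lt (- x) (- y) (- m) r.
rewrite !ltrN2 => /(_ hx hy hr). 
have -> : r * (- y - - x) + - x = - (r * (y - x) + x) by ring.
by rewrite ltrN2.
Qed.

Lemma seg_ball (c : pt) e a b r : ball c e (val a) -> ball c e (val b) ->
  i01 r -> ball c e (val (seg a b r)).
Proof.
move=> ha hb Hr; rewrite seg_val //.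
move: Hr => /itv01P /andP[r0 r1].
move: ha hb; rewrite /segp.
case: (val a) => a1 a2; case: (val b) => b1 b2; case: c => c1 c2.
rewrite /ball /= /prod_ball /ball /= !ltr_distlC.
move=> [/andP[? ?] /andP[? ?]] [/andP[? ?] /andP[? ?]].
have hr : 0 <= r <= 1 by apply/andP.
by split; apply/andP; split; [apply: conv_lt|apply: conv_gt|apply: conv_lt|apply: conv_gt].
Qed.

End disk.
Section dwedge_lemmas.
Local Open Scope ring_scope.
Context {d : Order.disp_t} {S : porderType d} (z : S -> Disk).

Lemma dwedge_Hop (A : set (dwedge z)) : open A <->
  exists2 F, F `<=` finI_from (@dwedge_open _ _ z) id & \bigcup_(i in F) i = A.
Proof.
rewrite /open /= /Builders_14.open_from /=; split => -[F ? ?]; by exists F.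
Qed.

Lemma dlift_cont s : continuous (dlift z s).
Proof.
by apply: (sb_cont dwedge_Hop (f := dlift z s)) => U [oU _].
Qed.

Lemma dliftE (t s : S) (b b' : Disk) : dlift z t b = dlift z s b' ->
  (t = s /\ b = b') \/ (b = z t /\ b' = z s).
Proof.
pose f := fun (i : S) (x : Disk) =>
  if x == z i then None else Some (i, x) : option (S * Disk).
have fE : forall i j, f i (z i) = f j (z j) by move=> i j; rewrite /f !eqxx.
move=> /(congr1 (wedge_fun f)); rewrite /dlift !wedge_lift_funE //.
rewrite /f; case: eqP => [->|_]; case: eqP => [->|_] //.
- by move=> _; right.
- by move=> [-> ->]; left.
Qed.

Lemma dlift_base (s t : S) : dlift z s (z s) = dlift z t (z t).
Proof. exact: (@wedge_liftE S (fun=> Disk) z t (z t) s (z s)). Qed.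

Lemma dwedge_surj (x : dwedge z) : exists s b, x = dlift z s b.
Proof.
have : [set: wedge z] x by [].
rewrite -wedgeTE => -[s _ [b _ <-]]; by exists s, b.
Qed.

Lemma dpath (V : set (dwedge z)) s (a b : Disk) :
  (forall r, i01 r -> V (dlift z s (seg a b r))) ->
  path_comp V (dlift z s a) (dlift z s b).
Proof.
move=> HV; exists (dlift z s \o seg a b); split.
- apply: (@within_comp _ _ _ i01 setT (seg a b) (dlift z s) (@seg_path a b)) => //.
  exact/continuous_subspaceT/dlift_cont.
- by rewrite /= seg0.
- by rewrite /= seg1.
- by move=> _ [r Hr <-]; exact: HV.
Qed.

End dwedge_lemmas.
Section dwedge_lpc.
Local Open Scope ring_scope.
Context {d : Order.disp_t} {S : porderType d} (z : S -> Disk).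

Lemma dwedge_pc (x y : dwedge z) : path_comp setT x y.
Proof.
have h s a : path_comp setT (dlift z s a) (dlift z s (z s)) by apply: dpath.
have [s [a ->]] := dwedge_surj x; have [t [b ->]] := dwedge_surj y.
apply: (path_comp_trans (h s a)); rewrite (dlift_base z s t).
exact: path_comp_sym.
Qed.

Lemma ball_ptP (c p : (R * R)%type) e :
  ball c e p <-> `|c.1 - p.1| < e /\ `|c.2 - p.2| < e.
Proof. by rewrite /ball /= /prod_ball /ball /=. Qed.

Lemma dwedge_lpc_base (s : S) (U : set (dwedge z)) : directed S ->
  nbhs (dlift z s (z s)) U ->
  exists V : set (dwedge z),
    [/\ open V, V (dlift z s (z s)), V `<=` U & path_connected V].
Proof.
move=> dirS nU; set x := dlift z s (z s).
pose F := [set W : set (dwedge z) | exists V,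
  [/\ @dwedge_open _ _ z V, V x & V `<=` W]].
have FF : Filter F.
  constructor.
  - exists setT; split => //; split => [t|s0 _]; first exact: openT.
    by exists s.
  - move=> P Q [V1 [ [Ho1 b1] h1 s1]] [V2 [ [Ho2 b2] h2 s2]].
    exists (V1 `&` V2); split => //; last first.
      by move=> w [/s1 ? /s2 ?]; split.
    split => [t|s0 _]; first by rewrite preimage_setI; exact: openI.
    have Vb1 : V1 (dlift z s0 (z s0)) by rewrite (dlift_base z s0 s); exact: h1.
    have Vb2 : V2 (dlift z s0 (z s0)) by rewrite (dlift_base z s0 s); exact: h2.
    have [t1 T1] := b1 s0 Vb1.
    have [t2 T2] := b2 s0 Vb2.
    have [c [c1 c2]] := dirS t1 t2; exists c => s' cs'.
    move=> w Hw; split.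
      by apply: (T1 s') => //; exact: le_lt_trans c1 cs'.
    by apply: (T2 s') => //; exact: le_lt_trans c2 cs'.
  - by move=> P Q PQ [V [? ? ?]]; exists V; split => //; exact: subset_trans PQ.
have [V [ [oV bV] Vx VU]] : F U.
  by apply: (@sb_nbhs_filter _ _ _ _ (@dwedge_Hop _ _ z) x F FF) => // V DV Vx;
    exists V; split.
have [t Ht] := bV s Vx.
have ex_e s' : exists e : R, 0 < e /\
    forall b : Disk, ball (val (z s')) e (val b) -> V (dlift z s' b).
  have : nbhs (z s') (dlift z s' @^-1` V).
    apply: open_nbhs_nbhs; split; first exact: oV.
    by rewrite /preimage /= (dlift_base z s' s).
  by move=> /disk_nbhs [e e0 He]; exists e; split.
pose e s' := projT1 (cid (ex_e s')).
have e0 s' : 0 < e s' by rewrite /e; case: cid => ? [].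
have eV s' : forall b : Disk, ball (val (z s')) (e s') (val b) -> V (dlift z s' b).
  by rewrite /e; case: cid => ? [].
pose V' := [set y | exists s' b, y = dlift z s' b /\
  ((t < s')%O \/ ball (val (z s')) (e s') (val b))].
have V'x : V' x by exists s, (z s); split => //; right; exact: ballxx.
have toX y : V' y -> path_comp V' y x.
  move=> [s' [b [-> H]]]; rewrite /x (dlift_base z s s').
  apply: dpath => r Hr; exists s', (seg b (z s') r); split => //.
  case: H => H; [by left | right].
  by apply: seg_ball => //; exact: ballxx.
exists V'; split => //.
- apply: (sb_in (@dwedge_Hop _ _ z)); split => [s'|s0 _].
  + have -> : dlift z s' @^-1` V' =
        [set b | (t < s')%O \/ ball (val (z s')) (e s') (val b)].
      apply/seteqP; split => b /=.
        move=> [s'' [b' [E H]]].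
        case: (dliftE E) => [[Es Eb]|[-> _]]; first by subst.

        by right; exact: ballxx.
      by move=> H; exists s', b.
    case: (boolP (t < s')%O) => Hts.
      rewrite (_ : [set b | _] = setT); first exact: openT.
      by apply/seteqP; split => // b _; left.
    rewrite (_ : [set b | _] = [set b : Disk | ball (val (z s')) (e s') (val b)]).
      exact: disk_ball_open.
    apply/seteqP; split => b; last by right.
    by case => // H; rewrite H in Hts.
  + by exists t => s' ts' _ [b _ <-]; exists s', b; split => //; left.
- move=> y [s' [b [-> [H|H]]]]; apply: VU.
    by apply: (Ht s') => //; exists b.
  exact: eV.
- move=> y1 y2 /toX h1 /toX h2; exact: path_comp_trans h1 (path_comp_sym h2).
Qed.

Lemma dwedge_lpc_nb (s : S) (a : Disk) (U : set (dwedge z)) : a != z s ->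
  nbhs (dlift z s a) U ->
  exists V : set (dwedge z),
    [/\ open V, V (dlift z s a), V `<=` U & path_connected V].
Proof.
move=> ha nU.
have nU' : nbhs a (dlift z s @^-1` U) := @dlift_cont _ _ z s a U nU.
have [e e0 He] := disk_nbhs nU'.
pose dd := `|(val a).1 - (val (z s)).1| + `|(val a).2 - (val (z s)).2|.
have dd0 : 0 < dd.
  rewrite lt_neqAle addr_ge0 // andbT eq_sym paddr_eq0 // !normr_eq0 !subr_eq0.
  apply/negP => /andP[/eqP E1 /eqP E2]; apply: (negP ha); apply/eqP/val_inj.
  by move: E1 E2; case: (val a) => ? ?; case: (val (z s)) => ? ? /= -> ->.
pose e' := Num.min e (dd / 2).
have e'0 : 0 < e' by rewrite lt_min e0 divr_gt0.
have Hb (b : Disk) : ball (val a) e' (val b) ->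
    ball (val a) e (val b) /\ b != z s.
  move=> /ball_ptP [h1 h2]; move: h1 h2; rewrite !lt_min.
  move=> /andP[h1 h1'] /andP[h2 h2'].
  split; first by apply/ball_ptP.
  apply/eqP => Eb; rewrite Eb in h1' h2'; move: h1' h2'; rewrite /dd.
  move: (`|(val a).1 - (val (z s)).1|) (`|(val a).2 - (val (z s)).2|) => u v.
  lra.
pose V := [set y | exists b, y = dlift z s b /\ ball (val a) e' (val b)].
exists V; split.
- apply: (sb_in (@dwedge_Hop _ _ z)); split => [t|s0].
  + case: (pselect (t = s)) => [->|nts].
      have -> : dlift z s @^-1` V = [set b | ball (val a) e' (val b)].
        apply/seteqP; split => b /=; last by move=> H; exists b.
        move=> [b' [E H]]; case: (dliftE E) => [[_ ->] // | [_ Eb']].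
        by have := (Hb _ H).2; rewrite Eb' eqxx.
      exact: disk_ball_open.
    have -> : dlift z t @^-1` V = set0.
      apply/seteqP; split => b //= [b' [E H]].
      case: (dliftE E) => [[Ets _] | [_ Eb']]; first by [].
      by have := (Hb _ H).2; rewrite Eb' eqxx.
    exact: open0.
  + move=> [b' [E H]]; exfalso.
    case: (dliftE E) => [[Es Eb] | [_ Eb']].
      by subst s0; have := (Hb _ H).2; rewrite -Eb eqxx.
    by have := (Hb _ H).2; rewrite Eb' eqxx.
- by exists a; split => //; exact: ballxx.
- by move=> y [b [-> H]]; exact: He (Hb _ H).1.
- move=> y1 y2 [b1 [-> H1]] [b2 [-> H2]]; apply: dpath => r Hr.
  by exists (seg b1 b2 r); split => //; exact: seg_ball.
Qed.

Lemma dwedge_lpc : directed S -> locally_path_connected (dwedge z).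
Proof.
move=> dirS x U nU; have [s [a Ex]] := dwedge_surj x; subst x.
have [Ea|ha] := eqVneq a (z s).
  by subst a; exact: dwedge_lpc_base.
exact: dwedge_lpc_nb.
Qed.

End dwedge_lpc.
Section prodt.
Context {S : Type} {E : S -> topologicalType}.
Lemma proj_cont (s : S) : continuous (fun f : prod_topology E => f s).
Proof.
move=> x.
have H := @cvg_sup _ S (fun i => Topological.class (@initial_topology (forall s, E s) (E i) (fun f => f i))) (nbhs (x : prod_topology E)) x _.
have := ((H (nbhs_filter (x : prod_topology E))).1 (@cvg_id _ (nbhs (x : prod_topology E)))) s.
move=> Hs.
have Hc := @initial_continuous _ _ (fun f : forall s, E s => f s) x.
move=> U HU; apply: Hs; exact: Hc HU.
Qed.

Lemma into_prod {X : topologicalType} (g : X -> prod_topology E) :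
  (forall s, continuous (fun x => g x s)) -> continuous g.
Proof.
move=> Hg x.
have H := @cvg_sup _ S (fun i => Topological.class (@initial_topology (forall s, E s) (E i) (fun f => f i))) (g @ nbhs x) (g x) _.
apply: (H _).2 => i.
apply: (continuous_comp_initial (w := fun f : forall s, E s => f i)).
exact: Hg.
Qed.
End prodt.
Section settype.
Local Open Scope ring_scope.
Context {Y : topologicalType} (A : set Y).

Lemma set_type_cont {X : topologicalType} (g : X -> set_type A) :
  continuous (fun x => val (g x)) -> continuous g.
Proof. move=> H; exact: (@continuous_comp_initial (set_type A) X Y val g H). Qed.

Lemma val_cont : continuous (fun a : set_type A => val a).
Proof. exact: initial_continuous. Qed.

Lemma path_set_type (a b : set_type A) :
  path_comp A (val a) (val b) -> @path_comp (set_type A) setT a b.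
Proof.
move=> [g [pg g0 g1 gA]].
exists (fun r => insubd a (g r)); split => //.
- apply: (set_type_cont (X := subspace i01)).
  apply: (@subspace_eq_continuous _ _ _ g) => //.
  move=> r /set_mem Hr; rewrite /from_subspace /= insubdK //.
  by apply/mem_set; apply: gA; exists r.
- apply: val_inj; rewrite insubdK // g0; exact: valP.
- apply: val_inj; rewrite insubdK // g1; exact: valP.
Qed.

End settype.

Lemma path_comp_comp {Y : topologicalType} (A : set Y) x0 x y :
  path_comp A x0 x -> path_comp A x y -> path_comp (path_comp A x0) x y.
Proof.
move=> h0 [g [pg g0 g1 gA]]; exists g; split => //.
move=> _ [r Hr <-]; apply: (path_comp_trans h0); rewrite -g0.
exact: (path_pts pg gA itv0 Hr).
Qed.

Lemma path_comp_peano {Y : topologicalType} (a b : Y) :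
  path_comp setT a b -> @path_comp (peanify Y) setT a b.
Proof.
move=> [g [pg g0 g1 _]]; exists g; split => //; exact: path_to_peano.
Qed.

Lemma path_comp_image {X Y : topologicalType} (G : X -> Y) (A : set Y) y0 :
  continuous G -> (forall x, A (G x)) -> (forall x y : X, path_comp setT x y) ->
  forall x0, path_comp A y0 (G x0) -> forall x, path_comp A y0 (G x).
Proof.
move=> cG GA pX x0 h x; apply: (path_comp_trans h).
exact: (path_comp_map cG (fun u _ => GA u) (pX x0 x)).
Qed.
Unset Implicit Arguments.
Section fib.
Context (B : topologicalType) (b0 : B) (S : Type) (E : S -> topologicalType)
  (p : forall s, E s -> B) (e : forall s, E s) (he : forall s, p s (e s) = b0).

Local Notation FC := (fib_comp p e).
Local Notation FS := (fib_space p e).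

Definition fproj (t : S) (x : FS) : E t := projT1 (x : set_type FC) t.

Lemma fproj_cont t : continuous (fproj t).
Proof.
move=> x.
have c1 := @peano_id_cont (set_type FC) x.
have c2 := @val_cont _ FC x.
have c3 := @proj_cont S E t (projT1 (x : set_type FC)).
exact: (continuous_comp (continuous_comp c1 c2) c3).
Qed.

Lemma fib_set_e : fib_set p e.
Proof. by move=> s t; rewrite !he. Qed.

Lemma fib_set_comp (x : FS) : fib_set p (projT1 (x : set_type FC)).
Proof. exact: path_comp_r (set_valP (x : set_type FC)). Qed.

Lemma fib_fproj_eq s t (x : FS) : p s (fproj s x) = p t (fproj t x).
Proof. exact: fib_set_comp. Qed.

Definition mk_fib {X : topologicalType} (G : X -> prod_topology E)
  (HG : forall x, FC (G x)) : X -> FS :=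
  fun x => (exist _ (G x) (mem_set (HG x)) : set_type FC).

Lemma mk_fib_cont {X : topologicalType} (G : X -> prod_topology E)
  (HG : forall x, FC (G x)) :
  locally_path_connected X -> continuous G -> continuous (mk_fib G HG).
Proof.
move=> lX cG.
have cf : continuous (fun x => (exist _ (G x) (mem_set (HG x)) : set_type FC)).
  by apply: set_type_cont.
exact: (lpc_to_peano lX cf).
Qed.

Lemma fib_peano : Peano FS.
Proof.
split; last exact: lpc_peano.
apply: (@pc_connected _ (fib_pt p e he)) => x.
apply: path_comp_peano; apply: path_set_type => /=.
apply: path_comp_comp; first exact: path_comp_refl fib_set_e.
exact: (set_valP (x : set_type FC)).
Qed.

End fib.
Arguments fproj {B S E} p e t x.
Arguments fproj_cont {B S E} p e t.
Arguments fib_set_e {B b0 S E} p e he.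
Arguments fib_set_comp {B S E} p e x.
Arguments fib_fproj_eq {B S E} p e s t x.
Arguments mk_fib {B S E} p e {X} G HG.
Arguments mk_fib_cont {B S E} p e {X} G HG.
Arguments fib_peano {B b0 S E} p e he.
Theorem proposition5p7 (B : topologicalType) (b0 : B)
  (S : Type) (s0 : S) (E : S -> topologicalType)
  (p : forall s, E s -> B) (e : forall s, E s)
  (he : forall s, p s (e s) = b0) :
  path_connected [set: B] ->
  (forall s, Peano (E s)) ->
  (forall s, dh_covering (p s)) ->
  [/\ dh_covering (fib_map p e s0),
      (forall s, dh_ge (fib_map p e s0) (fib_pt p e he) (p s) (e s)) &
      (forall (E' : topologicalType) (q : E' -> B) (e' : E'),
         (forall s, dh_ge q e' (p s) (e s)) ->
         dh_ge q e' (fib_map p e s0) (fib_pt p e he))].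
Proof.
move=> _ PE cov.
have cp s : continuous (p s) by case: (cov s).
have Hcov : dh_covering (fib_map p e s0).
  split.
    move=> x; have := continuous_comp (fproj_cont p e s0 x) (cp s0 (fproj p e s0 x)); exact.
  move=> d S' z dirS e0 x0 f cf fx0.
  have fx0' t : f x0 = p t (fproj p e t e0).
    by rewrite fx0; exact: fib_fproj_eq.
  have exg t := (cov t).2 d S' z dirS (fproj p e t e0) x0 f cf (fx0' t).
  pose G t := projT1 (cid (exg t)).
  have HG t : [/\ continuous (G t), p t \o G t = f & G t x0 = fproj p e t e0]
      /\ (forall g', [/\ continuous g', p t \o g' = f & g' x0 = fproj p e t e0]
            -> G t = g').
    by rewrite /G; case: cid.
  pose Gm x : prod_topology E := fun t => G t x.
  have cGm : continuous Gm.
    by apply: into_prod => t; case: (HG t) => -[].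
  have Gset x : fib_set p (Gm x).
    move=> t t'; rewrite /Gm.
    case: (HG t) => -[_ Ht _] _; case: (HG t') => -[_ Ht' _] _.
    by rewrite -[p t (G t x)]/((p t \o G t) x) -[p t' _]/((p t' \o G t') x) Ht Ht'.
  have Gx0 : Gm x0 = projT1 (e0 : set_type (fib_comp p e)).
    apply: functional_extensionality_dep => t; rewrite /Gm.
    by case: (HG t) => -[_ _ ->].
  have GC : forall x, fib_comp p e (Gm x).
    move=> x; apply: (path_comp_image cGm Gset (@dwedge_pc _ _ z) (x0 := x0)).
    rewrite Gx0; exact: (set_valP (e0 : set_type (fib_comp p e))).
  exists (mk_fib p e Gm GC); split; [split|].
  - exact: (mk_fib_cont p e Gm GC (dwedge_lpc dirS) cGm).
  - apply: funext => x /=; rewrite /fib_map /mk_fib /= /Gm.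
    by case: (HG s0) => -[_ <- _].
  - apply: val_inj; rewrite /mk_fib /=; exact: Gx0.
  - move=> g' [cg' fg' g'x0]; apply: funext => x; apply: val_inj.
    apply: functional_extensionality_dep => t /=.
    have := (HG t).2 (fproj p e t \o g').
    have Hc : continuous (fproj p e t \o g').
      by move=> y; exact: (continuous_comp (cg' y) (fproj_cont p e t _)).
    have Hf : p t \o (fproj p e t \o g') = f.
      apply: funext => y /=; rewrite (fib_fproj_eq p e t s0) -fg'.
      by [].
    have Hx : (fproj p e t \o g') x0 = fproj p e t e0 by rewrite /= g'x0.
    by move=> /(_ (And3 Hc Hf Hx)) /(congr1 (fun h => h x)).
split => //.
- move=> s; split => //.
  + exact: (fib_peano p e he).
  + split; first by rewrite /fib_map /= !he.
    exists (fproj p e s); split.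
    * exact: fproj_cont.
    * by apply: funext => x /=; rewrite (fib_fproj_eq p e s s0).
    * by [].
- move=> E' q e' H.
  have [PE' _ cq _ [qe _]] := H s0.
  have exf s : exists f : E' -> E s, [/\ continuous f, p s \o f = q & f e' = e s].
    by have [_ _ _ _ [_ ?]] := H s.
  pose fs s := projT1 (cid (exf s)).
  have Hfs s : [/\ continuous (fs s), p s \o fs s = q & fs s e' = e s].
    by rewrite /fs; case: cid.
  pose F x : prod_topology E := fun s => fs s x.
  have cF : continuous F by apply: into_prod => s; case: (Hfs s).
  have Fset x : fib_set p (F x).
    move=> t t'; rewrite /F.
    case: (Hfs t) => _ Ht _; case: (Hfs t') => _ Ht' _.
    by rewrite -[p t (fs t x)]/((p t \o fs t) x) -[p t' _]/((p t' \o fs t') x) Ht Ht'.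
  have Fe : F e' = e.
    by apply: functional_extensionality_dep => t; rewrite /F; case: (Hfs t).
  have FC : forall x, fib_comp p e (F x).
    move=> x; apply: (path_comp_image cF Fset (peano_pc PE') (x0 := e')).
    rewrite Fe; exact: path_comp_refl (fib_set_e p e he).
  split => //.
  + exact: (fib_peano p e he).
  + split; first by rewrite qe /fib_map /= .
    exists (mk_fib p e F FC); split.
    * exact: (mk_fib_cont p e F FC PE'.2 cF).
    * apply: funext => x /=; rewrite /fib_map /mk_fib /= /F.
      by case: (Hfs s0) => _ <- _.
    * apply: val_inj; rewrite /mk_fib /=; exact: Fe.
Qed.
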